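(* Let $X,Y$ be proper geodesically complete Gromov-hyperbolic Busemann spaces that are vertically convergent with respect to boundary points $\infty_X,\infty_Y$, with height functions $h_X,h_Y$ based at these points, and let $X\bowtie Y$ carry an admissible metric $d_\bowtie$ arising from an admissible monotone norm. For any $(x_1,y_1),(x_2,y_2)\in X\bowtie Y$, $$d_\bowtie((x_1,y_1),(x_2,y_2))\le d_X(x_1,x_2)+d_Y(y_1,y_2)+\min\{d_X(x_1,x_2),d_Y(y_1,y_2)\}.$$
   Context: Height function $h=-\beta$, $\beta(x)=\lim_{t\to\infty}[d(\gamma(t),x)-d(\gamma(t),x_0)]$ for a ray $\gamma$ representing the base point. $X\bowtie Y=\{(x,y):h_X(x)=-h_Y(y)\}$. A norm $N$ on $\mathbb{R}^2$ with $N(1,1)=1$ is admissible if $N(a,b)\ge(|a|+|b|)/2$ and monotone if non-decreasing in each coordinate on $[0,\infty)^2$. $d_\bowtie$ is the infimum over continuous paths $(\gamma_X,\gamma_Y):[0,1]\to X\bowtie Y$ of $\sup_{0=t_0<\dots<t_n=1}\sum_i N(d_X(\gamma_X(t_i),\gamma_X(t_{i+1})),d_Y(\gamma_Y(t_i),\gamma_Y(t_{i+1})))$. Busemann space and vertical convergence: as usual (distance between arc-length parametrized geodesics is convex; asymptotic rays to the base point converge after a time shift). *)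

(* Defs.v *)
From Stdlib Require Import Reals Lra.
From Coquelicot Require Import Coquelicot.
Open Scope R_scope.

Section Defs.
Context {X : Type} (d : X -> X -> R).

Definition is_metric : Prop :=
  (forall x y, d x y = 0 <-> x = y) /\
  (forall x y, d x y = d y x) /\
  (forall x y z, d x z <= d x y + d y z).

Definition is_open (U : X -> Prop) : Prop :=
  forall x, U x -> exists r, 0 < r /\ forall y, d x y < r -> U y.

Definition is_compact (K : X -> Prop) : Prop :=
  forall (I : Type) (U : I -> X -> Prop),
    (forall i, is_open (U i)) ->
    (forall x, K x -> exists i, U i x) ->
    exists l : list I, forall x, K x -> exists i, List.In i l /\ U i x.

Definition proper_space : Prop :=
  forall x r, is_compact (fun y => d x y <= r).

Definition geodesic_segment (g : R -> X) (x y : X) : Prop :=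
  g 0 = x /\ g (d x y) = y /\
  forall s t, 0 <= s <= d x y -> 0 <= t <= d x y -> d (g s) (g t) = Rabs (s - t).

Definition geodesic_space : Prop :=
  forall x y, exists g, geodesic_segment g x y.

(** Busemann convexity: for any two geodesic segments, affinely
    reparametrized on [0,1], the distance function is convex. *)
Definition busemann_space : Prop :=
  geodesic_space /\
  forall (c1 c2 : R -> X) (x1 y1 x2 y2 : X),
    geodesic_segment c1 x1 y1 -> geodesic_segment c2 x2 y2 ->
    forall s t l, 0 <= s <= 1 -> 0 <= t <= 1 -> 0 <= l <= 1 ->
      d (c1 (((1 - l) * s + l * t) * d x1 y1)) (c2 (((1 - l) * s + l * t) * d x2 y2))
      <= (1 - l) * d (c1 (s * d x1 y1)) (c2 (s * d x2 y2))
         + l * d (c1 (t * d x1 y1)) (c2 (t * d x2 y2)).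

Definition geodesically_complete : Prop :=
  forall (g : R -> X) x y, geodesic_segment g x y ->
    exists l : R -> X, (forall s t, d (l s) (l t) = Rabs (s - t)) /\
                       (forall s, 0 <= s <= d x y -> l s = g s).

Definition gromov_product (x y w : X) : R := (d x w + d y w - d x y) / 2.

Definition gromov_hyperbolic : Prop :=
  exists delta, 0 <= delta /\
    forall x y z w,
      gromov_product x z w >= Rmin (gromov_product x y w) (gromov_product y z w) - delta.

(** geodesic ray [0,+oo) -> X (values on negative times are irrelevant) *)
Definition geodesic_ray (g : R -> X) : Prop :=
  forall s t, 0 <= s -> 0 <= t -> d (g s) (g t) = Rabs (s - t).

Definition asymptotic_rays (g1 g2 : R -> X) : Prop :=
  exists C, forall t, 0 <= t -> d (g1 t) (g2 t) <= C.

(** vertical convergence w.r.t. the boundary point represented by the ray gam *)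
Definition vertically_convergent (gam : R -> X) : Prop :=
  forall k1 k2, geodesic_ray k1 -> geodesic_ray k2 ->
    asymptotic_rays k1 gam -> asymptotic_rays k2 gam ->
    exists tau, forall eps, 0 < eps -> exists T, forall t, T <= t ->
      d (k1 t) (k2 (t + tau)) < eps.

Definition busemann_fun (gam : R -> X) (x : X) : R :=
  real (Lim (fun t => d (gam t) x - d (gam t) (gam 0)) p_infty).

Definition height (gam : R -> X) (x : X) : R := - busemann_fun gam x.

Definition continuous_on01 (p : R -> X) : Prop :=
  forall s, 0 <= s <= 1 -> forall eps, 0 < eps -> exists del, 0 < del /\
    forall s', 0 <= s' <= 1 -> Rabs (s - s') < del -> d (p s) (p s') < eps.

End Defs.

Definition is_norm2 (N : R -> R -> R) : Prop :=
  (forall a b, 0 <= N a b) /\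
  (forall a b, N a b = 0 <-> (a = 0 /\ b = 0)) /\
  (forall l a b, N (l * a) (l * b) = Rabs l * N a b) /\
  (forall a b a' b', N (a + a') (b + b') <= N a b + N a' b').

Definition admissible_norm (N : R -> R -> R) : Prop :=
  is_norm2 N /\ N 1 1 = 1 /\ (forall a b, N a b >= (Rabs a + Rabs b) / 2).

Definition monotone_norm (N : R -> R -> R) : Prop :=
  forall a b a' b', 0 <= a <= a' -> 0 <= b <= b' -> N a b <= N a' b'.

Definition in_hprod {X Y : Type} (dX : X -> X -> R) (dY : Y -> Y -> R)
  (gX : R -> X) (gY : R -> Y) (x : X) (y : Y) : Prop :=
  height dX gX x = - height dY gY y.

Fixpoint psum (f : nat -> R) (n : nat) : R :=
  match n with O => 0 | S k => psum f k + f k end.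

Definition path_length {X Y : Type} (dX : X -> X -> R) (dY : Y -> Y -> R)
  (N : R -> R -> R) (pX : R -> X) (pY : R -> Y) : Rbar :=
  Lub_Rbar (fun s => exists (n : nat) (t : nat -> R),
     t O = 0 /\ t n = 1 /\ (forall i, (i < n)%nat -> t i < t (S i)) /\
     s = psum (fun i => N (dX (pX (t i)) (pX (t (S i)))) (dY (pY (t i)) (pY (t (S i))))) n).

Definition d_hprod {X Y : Type} (dX : X -> X -> R) (dY : Y -> Y -> R)
  (gX : R -> X) (gY : R -> Y) (N : R -> R -> R) (x1 : X) (y1 : Y) (x2 : X) (y2 : Y) : Rbar :=
  Glb_Rbar (fun r => exists (pX : R -> X) (pY : R -> Y),
     continuous_on01 dX pX /\ continuous_on01 dY pY /\
     (forall s, 0 <= s <= 1 -> in_hprod dX dY gX gY (pX s) (pY s)) /\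
     pX 0 = x1 /\ pY 0 = y1 /\ pX 1 = x2 /\ pY 1 = y2 /\
     path_length dX dY N pX pY = Finite r).

(* Main.v *)
Require Import Defs.
From Stdlib Require Import Reals Lra Lia Classical List.
From Coquelicot Require Import Coquelicot.
Open Scope R_scope.


Lemma nat_above (x : R) : exists n : nat, x <= INR n.
Proof.
  destruct (Rle_lt_dec 0 x) as [H|H].
  - destruct (nfloor_ex x H) as [n Hn]. exists (S n). rewrite S_INR. lra.
  - exists O. simpl. lra.
Qed.

Section Buse.
Context {X : Type} (d : X -> X -> R) (gam : R -> X).
Hypothesis Hm : is_metric d.
Hypothesis Hr : geodesic_ray d gam.

Lemma dsym x y : d x y = d y x.
Proof. destruct Hm as [_ [H _]]. apply H. Qed.
Lemma dtri x y z : d x z <= d x y + d y z.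
Proof. destruct Hm as [_ [_ H]]. apply H. Qed.
Lemma dxx x : d x x = 0.
Proof. destruct Hm as [H _]. apply H. reflexivity. Qed.
Lemma dpos x y : 0 <= d x y.
Proof. pose proof (dtri x y x). rewrite dxx, (dsym y x) in H. lra. Qed.

Lemma gam0 t : 0 <= t -> d (gam t) (gam 0) = t.
Proof. intros. rewrite Hr; try lra. rewrite Rminus_0_r. apply Rabs_pos_eq; lra. Qed.

Definition useq x (n : nat) := d (gam (INR n)) x - d (gam (INR n)) (gam 0).

Lemma useq_eq x n : useq x n = d (gam (INR n)) x - INR n.
Proof. unfold useq. rewrite gam0; auto. apply pos_INR. Qed.

Lemma useq_decr x n : useq x (S n) <= useq x n.
Proof.
  rewrite !useq_eq. rewrite S_INR.
  pose proof (dtri (gam (INR n + 1)) (gam (INR n)) x).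
  rewrite Hr in H; try (pose proof (pos_INR n); lra).
  replace (INR n + 1 - INR n) with 1 in H by ring. rewrite Rabs_R1 in H. lra.
Qed.

Lemma useq_low x n : - d x (gam 0) <= useq x n.
Proof.
  unfold useq. pose proof (dtri (gam (INR n)) x (gam 0)). lra.
Qed.

Lemma useq_lim x : is_lim_seq (useq x) (busemann_fun d gam x).
Proof.
  assert (E : ex_finite_lim_seq (useq x)).
  { apply ex_finite_lim_seq_decr with (M := - d x (gam 0)).
    apply useq_decr. apply useq_low. }
  destruct E as [l Hl].
  unfold busemann_fun, Lim. simpl.
  assert (Lim_seq (fun n => d (gam (INR n)) x - d (gam (INR n)) (gam 0)) = l).
  { apply is_lim_seq_unique. exact Hl. }
  rewrite H. simpl. exact Hl.
Qed.

Notation b := (busemann_fun d gam).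

Lemma b_le_useq x n : b x <= useq x n.
Proof. apply (is_lim_seq_decr_compare _ _ (useq_lim x)). apply useq_decr. Qed.

Lemma b_lip x y : b x - b y <= d x y.
Proof.
  assert (H : forall n, useq x n <= useq y n + d x y).
  { intros n. unfold useq. pose proof (dtri (gam (INR n)) y x). rewrite (dsym y x) in H. lra. }
  assert (Hl : is_lim_seq (fun n => useq y n + d x y) (b y + d x y)).
  { apply (is_lim_seq_plus _ _ (b y) (d x y)). apply useq_lim. apply is_lim_seq_const.
    reflexivity. }
  pose proof (is_lim_seq_le _ _ _ _ H (useq_lim x) Hl). simpl in H0. lra.
Qed.

Lemma b_le_real x t : 0 <= t -> b x <= d (gam t) x - t.
Proof.
  intros Ht. destruct (nat_above t) as [n Hn].
  pose proof (b_le_useq x n). rewrite useq_eq in H.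
  pose proof (dtri (gam (INR n)) (gam t) x).
  rewrite Hr in H0; try lra. rewrite Rabs_pos_eq in H0; lra.
Qed.

Lemma b_conv x eps : 0 < eps -> exists N0 : nat, forall n, (N0 <= n)%nat ->
   d (gam (INR n)) x - INR n < b x + eps.
Proof.
  intros He. pose proof (useq_lim x) as L. apply is_lim_seq_spec in L.
  destruct (L (mkposreal eps He)) as [N0 HN]. exists N0. intros n Hn.
  specialize (HN n Hn). simpl in HN. rewrite useq_eq in HN.
  apply Rabs_lt_between in HN. lra.
Qed.

End Buse.


Lemma list_max (l : list nat) : exists m, forall i, In i l -> (i <= m)%nat.
Proof.
  induction l as [|a l [m Hm]].
  - exists O. intros i [].
  - exists (Nat.max a m). intros i [H|H]. subst. apply Nat.le_max_l.
    apply Nat.le_trans with m. auto. apply Nat.le_max_r.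
Qed.

Section Geo.
Context {X : Type} (d : X -> X -> R) (gam : R -> X).
Hypothesis Hm : is_metric d.
Hypothesis Hr : geodesic_ray d gam.
Hypothesis Hb : busemann_space d.
Hypothesis Hc : geodesically_complete d.
Hypothesis Hp : proper_space d.

Notation b := (busemann_fun d gam).

Lemma attain_max (K : X -> Prop) (f : X -> R) (M : R) :
  is_compact d K -> (forall y z, f y - f z <= d z y) ->
  (forall z, K z -> f z <= M) ->
  (forall eps, 0 < eps -> exists z, K z /\ M - eps < f z) ->
  exists z, K z /\ f z = M.
Proof.
  intros HK Hf Hle Happ. apply NNPP. intros Hno.
  assert (Hlt : forall z, K z -> f z < M).
  { intros z Kz. destruct (Rle_lt_or_eq_dec _ _ (Hle z Kz)) as [h|h]; auto.
    exfalso. apply Hno. exists z. auto. }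
  set (U := fun (n : nat) (z : X) => f z < M - / (INR n + 1)).
  destruct (HK nat U) as [l Hl].
  - intros n z Hz. unfold U in *. exists (M - / (INR n + 1) - f z). split. lra.
    intros y Hy. pose proof (Hf y z). lra.
  - intros z Kz. specialize (Hlt z Kz).
    destruct (nat_above (/ (M - f z))) as [n Hn]. exists n. unfold U.
    assert (0 < M - f z) by lra.
    assert (/ (INR n + 1) < M - f z).
    { rewrite <- (Rinv_inv (M - f z)). apply Rinv_lt_contravar.
      apply Rmult_lt_0_compat. apply Rinv_0_lt_compat; lra. pose proof (pos_INR n); lra.
      lra. }
    lra.
  - destruct (list_max l) as [m Hmx].
    assert (0 < / (INR m + 1)). { apply Rinv_0_lt_compat. pose proof (pos_INR m); lra. }
    destruct (Happ _ H) as [z [Kz Hz]].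
    destruct (Hl z Kz) as [i [Hi Ui]]. unfold U in Ui.
    assert (/ (INR m + 1) <= / (INR i + 1)).
    { apply Rinv_le_contravar. pose proof (pos_INR i); lra.
      apply Rplus_le_compat_r. apply le_INR. auto. }
    lra.
Qed.

Lemma conv01 (c1 c2 : R -> X) x1 y1 x2 y2 lam :
  geodesic_segment d c1 x1 y1 -> geodesic_segment d c2 x2 y2 -> 0 <= lam <= 1 ->
  d (c1 (lam * d x1 y1)) (c2 (lam * d x2 y2)) <= (1 - lam) * d x1 x2 + lam * d y1 y2.
Proof.
  intros G1 G2 Hl. destruct Hb as [_ Hconv].
  pose proof (Hconv c1 c2 x1 y1 x2 y2 G1 G2 0 1 lam) as H.
  replace ((1 - lam) * 0 + lam * 1) with lam in H by ring.
  rewrite !Rmult_0_l, !Rmult_1_l in H.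
  destruct G1 as [A1 [B1 _]]. destruct G2 as [A2 [B2 _]].
  rewrite A1, A2, B1, B2 in H. apply H; lra.
Qed.

Lemma up_approx x S eps : 0 <= S -> 0 < eps ->
  exists w, d x w <= S /\ b w <= b x - S + eps.
Proof.
  intros HS He. destruct (b_conv d gam Hm Hr x eps He) as [N0 HN].
  destruct (nat_above (S + d x (gam 0))) as [n1 Hn1].
  set (n := Nat.max N0 n1).
  assert (Hn : (N0 <= n)%nat) by apply Nat.le_max_l.
  assert (Hn1' : S + d x (gam 0) <= INR n).
  { apply Rle_trans with (INR n1); auto. apply le_INR. apply Nat.le_max_r. }
  specialize (HN n Hn).
  set (L := d x (gam (INR n))).
  assert (HL : S <= L).
  { pose proof (dtri d Hm (gam 0) x (gam (INR n))). rewrite (dsym d Hm (gam 0) (gam (INR n))) in H.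
    rewrite gam0 in H; auto. rewrite (dsym d Hm (gam 0) x) in H. unfold L. lra. apply pos_INR. }
  destruct Hb as [Hg _]. destruct (Hg x (gam (INR n))) as [g [G0 [G1 G2]]].
  exists (g S). fold L in G1, G2. split.
  - rewrite <- G0 at 1. rewrite G2; try lra. rewrite Rminus_0_l, Rabs_Ropp, Rabs_pos_eq; lra.
  - pose proof (b_le_real d gam Hm Hr (g S) (INR n) (pos_INR n)).
    rewrite <- G1 in H. rewrite G2 in H; try lra. rewrite Rabs_pos_eq in H; try lra.
    rewrite (dsym d Hm) in HN. fold L in HN. lra.
Qed.

End Geo.


Section Geo2.
Context {X : Type} (d : X -> X -> R) (gam : R -> X).
Hypothesis Hm : is_metric d.
Hypothesis Hr : geodesic_ray d gam.
Hypothesis Hb : busemann_space d.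
Hypothesis Hc : geodesically_complete d.

Notation b := (busemann_fun d gam).
Let sym := dsym d Hm.
Let tri := dtri d Hm.
Let gz := gam0 d gam Hr.

Lemma down_approx x S eps : 0 < S -> 0 < eps ->
  exists z, d x z <= S /\ b x + S - eps <= b z.
Proof.
  intros HS He.
  set (D0 := d x (gam 0)). set (K := S + D0).
  assert (HD0 : 0 <= D0) by apply (dpos d Hm).
  assert (HK0 : 0 <= K) by (unfold K; lra).
  set (M := 4 * S * K / eps).
  assert (HM : eps * M = 4 * S * K) by (unfold M; field; lra).
  assert (HM0 : 0 <= M).
  { unfold M. apply Rmult_le_pos. unfold K; nra. left; apply Rinv_0_lt_compat; lra. }
  destruct (nat_above (D0 + M + 1)) as [T HT].
  set (T' := INR T).
  assert (HT0 : 0 <= T') by apply pos_INR.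
  assert (HT1 : D0 + M + 1 <= T') by exact HT.
  destruct Hb as [Hg _].
  destruct (Hg (gam T') x) as [g Gg].
  set (LT := d (gam T') x).
  destruct (Hc g _ _ Gg) as [l [Hl1 Hl2]]. fold LT in Hl2.
  destruct Gg as [g0 [gL giso]]. fold LT in gL, giso.
  assert (HLT : 0 <= LT) by apply (dpos d Hm).
  set (L1 := LT + S). set (z := l L1).
  assert (l0 : l 0 = gam T'). { rewrite Hl2. auto. lra. }
  assert (lLT : l LT = x). { rewrite Hl2. auto. lra. }
  assert (dxz : d x z = S).
  { unfold z. rewrite <- lLT. rewrite Hl1. unfold L1.
    replace (LT - (LT + S)) with (- S) by ring. rewrite Rabs_Ropp, Rabs_pos_eq; lra. }
  assert (dzT : d z (gam T') = L1).
  { unfold z. rewrite <- l0, Hl1. rewrite Rminus_0_r, Rabs_pos_eq; unfold L1; lra. }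
  assert (HLTlow : T' - D0 <= LT).
  { pose proof (tri (gam T') x (gam 0)). rewrite gz in H; auto. fold D0 in H.
    unfold LT. lra. }
  assert (HzK : d z (gam 0) <= K).
  { pose proof (tri z x (gam 0)). rewrite (sym z x), dxz in H. unfold K. fold D0 in H. lra. }
  set (c1 := fun s => l (L1 - s)).
  assert (C1 : geodesic_segment d c1 z (gam T')).
  { unfold geodesic_segment, c1. rewrite dzT. split. rewrite Rminus_0_r. reflexivity.
    split. rewrite Rminus_diag. auto.
    intros s t _ _. rewrite Hl1. replace (L1 - s - (L1 - t)) with (- (s - t)) by ring. apply Rabs_Ropp. }
  destruct (b_conv d gam Hm Hr z (eps/2)) as [N0 HN]. lra.
  destruct (nat_above (T' + K + S + 1)) as [n1 Hn1].
  set (n := Nat.max N0 n1).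
  assert (Hn : (N0 <= n)%nat) by apply Nat.le_max_l.
  set (t' := INR n).
  assert (Ht' : T' + K + S + 1 <= t').
  { apply Rle_trans with (INR n1); auto. apply le_INR. apply Nat.le_max_r. }
  specialize (HN n Hn). fold t' in HN.
  destruct (Hg z (gam t')) as [c2 C2].
  set (L2 := d z (gam t')).
  assert (HL2 : t' - K <= L2).
  { pose proof (tri (gam 0) z (gam t')). rewrite (sym (gam 0) (gam t')), gz in H; auto.
    rewrite sym in H. unfold L2. lra. unfold t'; apply pos_INR. }
  destruct C2 as [c20 [c2L c2iso]]. fold L2 in c2L, c2iso.
  set (c2b := fun u => c2 (L2 - u)).
  assert (C2b : geodesic_segment d c2b (gam t') z).
  { unfold geodesic_segment, c2b. rewrite (sym (gam t') z). fold L2. split.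
    rewrite Rminus_0_r. auto. split. rewrite Rminus_diag. auto.
    intros s t Hs Ht. rewrite c2iso; try lra. replace (L2 - s - (L2 - t)) with (- (s - t)) by ring. apply Rabs_Ropp. }
  set (gb := fun u => gam (t' - u)).
  assert (Gb : geodesic_segment d gb (gam t') (gam 0)).
  { unfold geodesic_segment, gb. rewrite gz; [|unfold t'; apply pos_INR]. split.
    rewrite Rminus_0_r. auto. split. rewrite Rminus_diag. auto.
    intros s t Hs Ht. rewrite Hr; try lra. replace (t' - s - (t' - t)) with (- (s - t)) by ring. apply Rabs_Ropp. }
  set (lam := (t' - T') / t').
  assert (Hlam : 0 <= lam <= 1).
  { unfold lam. split. apply Rmult_le_pos. lra. left; apply Rinv_0_lt_compat; lra.
    apply Rmult_le_reg_r with t'. lra. unfold Rdiv. rewrite Rmult_assoc, Rinv_l. lra. lra. }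
  pose proof (conv01 d Hb c2b gb _ _ _ _ lam C2b Gb Hlam) as Hp.
  rewrite (sym (gam t') z), gz in Hp; [|unfold t'; apply pos_INR]. fold L2 in Hp.
  rewrite dxx in Hp; auto.
  set (mu := L2 - lam * L2).
  assert (Hmu : 0 <= mu <= L2) by (unfold mu; nra).
  assert (gbT : gb (lam * t') = gam T').
  { unfold gb. f_equal. unfold lam. field. lra. }
  rewrite gbT in Hp. unfold c2b in Hp. fold mu in Hp.
  set (p := c2 mu) in *.
  assert (HpT : d p (gam T') <= K).
  { apply Rle_trans with (lam * d z (gam 0)). lra. nra. }
  assert (dzp : d z p = mu).
  { unfold p. rewrite <- c20 at 1. rewrite c2iso; try lra. rewrite Rminus_0_l, Rabs_Ropp, Rabs_pos_eq; lra. }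
  assert (C2' : geodesic_segment d c2 z p).
  { split. auto. split. rewrite dzp. reflexivity. rewrite dzp. intros; apply c2iso; lra. }
  set (th := S / L1).
  assert (HL1 : 0 < L1) by (unfold L1; lra).
  assert (Hth : 0 <= th <= 1).
  { unfold th. split. apply Rmult_le_pos. lra. left; apply Rinv_0_lt_compat; lra.
    apply Rmult_le_reg_r with L1. lra. unfold Rdiv. rewrite Rmult_assoc, Rinv_l. unfold L1; lra. lra. }
  assert (thL1 : th * L1 = S) by (unfold th; field; lra).
  pose proof (conv01 d Hb c1 c2 _ _ _ _ th C1 C2' Hth) as Hq.
  rewrite dxx in Hq; auto. rewrite dzT, dzp, thL1 in Hq.
  assert (c1S : c1 S = x). { unfold c1, L1. replace (LT + S - S) with LT by ring. auto. }
  rewrite c1S in Hq.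
  set (w := c2 S).
  assert (Hqw : d (c2 (th * mu)) w <= th * K).
  { unfold w. rewrite c2iso; try nra.
    replace (th * mu - S) with (th * (mu - L1)) by (rewrite <- thL1; ring).
    rewrite Rabs_mult, (Rabs_pos_eq th); try lra.
    apply Rmult_le_compat_l. lra.
    rewrite <- dzp, <- dzT.
    apply Rabs_le. pose proof (tri z p (gam T')). pose proof (tri z (gam T') p).
    rewrite (sym (gam T') p) in H0. lra. }
  assert (Hxw : d x w <= 2 * th * K).
  { pose proof (tri x (c2 (th * mu)) w). rewrite (sym (gam T') p) in Hq. nra. }
  assert (Hsmall : 2 * th * K <= eps / 2).
  { assert (L1 >= M) by (unfold L1; lra).
    assert (0 <= K) by (unfold K; lra).
    assert (eps / 2 * L1 >= 2 * th * K * L1) by nra.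
    nra. }
  assert (Hbw : b w <= L2 - S - t').
  { assert (0 <= t') by (unfold t'; apply pos_INR).
    pose proof (b_le_real d gam Hm Hr w t' H).
    assert (d (gam t') w = L2 - S).
    { unfold w. rewrite <- c2L. rewrite c2iso; try lra. apply Rabs_pos_eq; lra. }
    lra. }
  rewrite sym in HN. fold L2 in HN.
  pose proof (b_lip d gam Hm Hr x w).
  exists z. split. lra. lra.
Qed.

End Geo2.


Section Geo3.
Context {X : Type} (d : X -> X -> R) (gam : R -> X).
Hypothesis Hm : is_metric d.
Hypothesis Hr : geodesic_ray d gam.
Hypothesis Hb : busemann_space d.
Hypothesis Hc : geodesically_complete d.
Hypothesis Hp : proper_space d.

Notation b := (busemann_fun d gam).
Let sym := dsym d Hm.
Let tri := dtri d Hm.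
Let lip := b_lip d gam Hm Hr.

Lemma down_exact x S : 0 <= S -> exists z, d x z = S /\ b z = b x + S.
Proof.
  intros HS.
  assert (exists z, d x z <= S /\ b z = b x + S).
  { destruct (Rle_lt_or_eq_dec _ _ HS) as [HS'|HS'].
    - destruct (attain_max d (fun y => d x y <= S) b (b x + S)) as [z Hz].
      + apply Hp.
      + intros y z. rewrite (sym z y). apply lip.
      + intros z Hz. pose proof (lip z x). rewrite (sym z x) in H. lra.
      + intros eps He. destruct (down_approx d gam Hm Hr Hb Hc x S (eps/2)) as [z Hz]; try lra.
        exists z. split. tauto. lra.
      + exists z. exact Hz.
    - subst S. exists x. rewrite dxx; auto. split; lra. }
  destruct H as [z [H1 H2]]. exists z. split; auto.
  pose proof (lip z x). rewrite (sym z x) in H. lra.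
Qed.

Lemma up_exact x S : 0 <= S -> exists w, d x w = S /\ b w = b x - S.
Proof.
  intros HS.
  assert (exists w, d x w <= S /\ b w = b x - S).
  { destruct (attain_max d (fun y => d x y <= S) (fun y => - b y) (- b x + S)) as [z Hz].
    + apply Hp.
    + intros y z. pose proof (lip z y). lra.
    + intros z Hz. pose proof (lip x z). lra.
    + intros eps He. destruct (up_approx d gam Hm Hr Hb x S (eps/2)) as [z Hz]; try lra.
      exists z. split. tauto. lra.
    + exists z. split. tauto. lra. }
  destruct H as [z [H1 H2]]. exists z. split; auto.
  pose proof (lip x z). lra.
Qed.

Lemma vertical x S : 0 <= S -> exists v : R -> X, v 0 = x /\
  (forall r, -S <= r <= S -> b (v r) = b x + r) /\
  (forall r r', -S <= r <= S -> -S <= r' <= S -> d (v r) (v r') <= Rabs (r - r')).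
Proof.
  intros HS.
  destruct (down_exact x S HS) as [z [dz bz]].
  destruct (up_exact x S HS) as [w [dw bw]].
  destruct Hb as [Hg _].
  destruct (Hg x z) as [cd [cd0 [cdL cdi]]]. rewrite dz in cdL, cdi.
  destruct (Hg x w) as [cu [cu0 [cuL cui]]]. rewrite dw in cuL, cui.
  assert (D1 : forall r, 0 <= r <= S -> d (cd r) x = r /\ d z (cd r) = S - r).
  { intros r Hr'. assert (A : d (cd r) (cd 0) = Rabs (r - 0)) by (apply cdi; lra).
    assert (B : d (cd S) (cd r) = Rabs (S - r)) by (apply cdi; lra).
    rewrite cd0 in A. rewrite cdL in B. rewrite A, B.
    rewrite !Rabs_pos_eq; lra. }
  assert (D2 : forall r, 0 <= r <= S -> d x (cu r) = r /\ d (cu r) w = S - r).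
  { intros r Hr'. assert (A : d (cu 0) (cu r) = Rabs (0 - r)) by (apply cui; lra).
    assert (B : d (cu r) (cu S) = Rabs (r - S)) by (apply cui; lra).
    rewrite cu0 in A. rewrite cuL in B. rewrite A, B.
    rewrite (Rabs_minus_sym 0 r), (Rabs_minus_sym r S), !Rabs_pos_eq; lra. }
  assert (bcd : forall r, 0 <= r <= S -> b (cd r) = b x + r).
  { intros r Hr'. pose proof (lip (cd r) x). pose proof (lip z (cd r)).
    destruct (D1 r Hr'). lra. }
  assert (bcu : forall r, 0 <= r <= S -> b (cu r) = b x - r).
  { intros r Hr'. pose proof (lip x (cu r)). pose proof (lip (cu r) w).
    destruct (D2 r Hr'). lra. }
  exists (fun r => if Rle_dec 0 r then cd r else cu (- r)).
  split; [|split].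
  - destruct (Rle_dec 0 0); [auto|lra].
  - intros r Hr'. destruct (Rle_dec 0 r). apply bcd; lra. rewrite bcu; lra.
  - intros r r' H1 H2. destruct (Rle_dec 0 r); destruct (Rle_dec 0 r').
    + right; apply cdi; lra.
    + pose proof (tri (cd r) x (cu (-r'))). destruct (D1 r) as [A _]; try lra.
      destruct (D2 (-r')) as [B _]; try lra. rewrite Rabs_pos_eq; lra.
    + pose proof (tri (cu (-r)) x (cd r')). destruct (D1 r') as [A _]; try lra.
      destruct (D2 (-r)) as [B _]; try lra. rewrite (sym (cu (-r)) x), (sym (cd r') x) in *.
      rewrite Rabs_left; lra.
    + rewrite cui; try lra. replace (- r - - r') with (- (r - r')) by ring. rewrite Rabs_Ropp. lra.
Qed.

End Geo3.


Definition vert_prop {X : Type} (d : X -> X -> R) (b : X -> R) : Prop :=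
  forall x S, 0 <= S -> exists v : R -> X, v 0 = x /\
  (forall r, -S <= r <= S -> b (v r) = b x + r) /\
  (forall r r', -S <= r <= S -> -S <= r' <= S -> d (v r) (v r') <= Rabs (r - r')).

Section Core.
Context {X Y : Type} (dX : X -> X -> R) (dY : Y -> Y -> R) (bX : X -> R) (bY : Y -> R).
Hypothesis HmX : is_metric dX.
Hypothesis HmY : is_metric dY.
Hypothesis lipX : forall u v, bX u - bX v <= dX u v.
Hypothesis lipY : forall u v, bY u - bY v <= dY u v.
Hypothesis geoX : geodesic_space dX.
Hypothesis geoY : geodesic_space dY.
Hypothesis vX : vert_prop dX bX.
Hypothesis vY : vert_prop dY bY.

Lemma core x1 y1 x2 y2 : bX x1 + bY y1 = 0 -> bX x2 + bY y2 = 0 ->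
  exists (pX : R -> X) (pY : R -> Y) (F : R -> R) (C : R),
    (forall s, 0 <= s <= 1 -> bX (pX s) + bY (pY s) = 0) /\
    pX 0 = x1 /\ pY 0 = y1 /\ pX 1 = x2 /\ pY 1 = y2 /\
    F 0 = 0 /\ F 1 <= 2 * dX x1 x2 + dY y1 y2 /\ 0 <= C /\
    (forall u u', 0 <= u <= u' -> u' <= 1 ->
       dX (pX u) (pX u') <= F u' - F u /\ dY (pY u) (pY u') <= F u' - F u /\
       F u' - F u <= C * (u' - u)).
Proof.
  intros E1 E2.
  set (a := dX x1 x2). set (bb := dY y1 y2).
  assert (Ha : 0 <= a) by apply (dpos dX HmX).
  assert (Hbb : 0 <= bb) by apply (dpos dY HmY).
  destruct (geoX x1 x2) as [cX [cX0 [cXa cXi]]]. fold a in cXa, cXi.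
  destruct (vY y1 a Ha) as [wY [wY0 [wYh wYl]]].
  assert (DX : forall s, 0 <= s <= a -> Rabs (bX x1 - bX (cX s)) <= s).
  { intros s Hs. assert (dX (cX 0) (cX s) = Rabs (0 - s)) by (apply cXi; lra).
    rewrite cX0, Rminus_0_l, Rabs_Ropp, Rabs_pos_eq in H; try lra.
    pose proof (lipX x1 (cX s)). pose proof (lipX (cX s) x1).
    rewrite (dsym dX HmX (cX s)) in H1. apply Rabs_le. lra. }
  set (y1' := wY (bX x1 - bX x2)).
  assert (Hy1' : bY y1' = - bX x2).
  { unfold y1'. rewrite wYh. lra. pose proof (DX a). rewrite cXa in H. apply Rabs_le_between.
    apply H. lra. }
  destruct (geoY y1' y2) as [cY [cY0 [cYb cYi]]].
  set (b' := dY y1' y2) in *.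
  assert (Hb' : 0 <= b') by apply (dpos dY HmY).
  assert (Hb'le : b' <= a + bb).
  { unfold b'. pose proof (dtri dY HmY y1' y1 y2).
    assert (dY y1' y1 <= a).
    { unfold y1'. rewrite <- wY0. eapply Rle_trans. apply wYl.
      pose proof (DX a). rewrite cXa in H0. apply Rabs_le_between. apply H0; lra. lra.
      rewrite Rminus_0_r. pose proof (DX a). rewrite cXa in H0. apply H0; lra. }
    fold bb in H. lra. }
  destruct (vX x2 b' Hb') as [wX [wX0 [wXh wXl]]].
  assert (DY : forall s, 0 <= s <= b' -> Rabs (bY y1' - bY (cY s)) <= s).
  { intros s Hs. assert (dY (cY 0) (cY s) = Rabs (0 - s)) by (apply cYi; lra).
    rewrite cY0, Rminus_0_l, Rabs_Ropp, Rabs_pos_eq in H; try lra.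
    pose proof (lipY y1' (cY s)). pose proof (lipY (cY s) y1').
    rewrite (dsym dY HmY (cY s)) in H1. apply Rabs_le. lra. }
  set (P1X := fun u => cX (2 * u * a)).
  set (P1Y := fun u => wY (bX x1 - bX (cX (2 * u * a)))).
  set (P2Y := fun u => cY ((2 * u - 1) * b')).
  set (P2X := fun u => wX (bY y1' - bY (cY ((2 * u - 1) * b')))).
  assert (J1 : P1X (1/2) = P2X (1/2)).
  { unfold P1X, P2X. replace (2 * (1/2) * a) with a by field. replace ((2 * (1/2) - 1) * b') with 0 by field.
    rewrite cXa, cY0. replace (bY y1' - bY y1') with 0 by ring. auto. }
  assert (J2 : P1Y (1/2) = P2Y (1/2)).
  { unfold P1Y, P2Y. replace (2 * (1/2) * a) with a by field. replace ((2 * (1/2) - 1) * b') with 0 by field.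
    rewrite cXa, cY0. reflexivity. }
  set (pX := fun u => if Rle_dec u (1/2) then P1X u else P2X u).
  set (pY := fun u => if Rle_dec u (1/2) then P1Y u else P2Y u).
  set (F := fun u => if Rle_dec u (1/2) then 2 * a * u else a + 2 * b' * (u - 1/2)).
  assert (pX1 : forall u, u <= 1/2 -> pX u = P1X u).
  { intros u Hu. unfold pX. destruct (Rle_dec u (1/2)); [auto|lra]. }
  assert (pX2 : forall u, 1/2 <= u -> pX u = P2X u).
  { intros u Hu. unfold pX. destruct (Rle_dec u (1/2)); auto.
    replace u with (1/2) by lra. auto. }
  assert (pY1 : forall u, u <= 1/2 -> pY u = P1Y u).
  { intros u Hu. unfold pY. destruct (Rle_dec u (1/2)); [auto|lra]. }
  assert (pY2 : forall u, 1/2 <= u -> pY u = P2Y u).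
  { intros u Hu. unfold pY. destruct (Rle_dec u (1/2)); auto.
    replace u with (1/2) by lra. auto. }
  assert (F1 : forall u, u <= 1/2 -> F u = 2 * a * u).
  { intros u Hu. unfold F. destruct (Rle_dec u (1/2)); [auto|lra]. }
  assert (F2 : forall u, 1/2 <= u -> F u = a + 2 * b' * (u - 1/2)).
  { intros u Hu. unfold F. destruct (Rle_dec u (1/2)); auto.
    replace u with (1/2) by lra. field. }
  assert (Ph1 : forall u u', 0 <= u <= u' -> u' <= 1/2 ->
     dX (P1X u) (P1X u') <= 2 * a * (u' - u) /\ dY (P1Y u) (P1Y u') <= 2 * a * (u' - u)).
  { intros u u' H1 H2.
    assert (E : dX (P1X u) (P1X u') = 2 * a * (u' - u)).
    { unfold P1X. rewrite cXi; try nra. rewrite Rabs_minus_sym, Rabs_pos_eq; nra. }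
    split. lra. unfold P1Y. eapply Rle_trans. apply wYl.
    - pose proof (DX (2*u*a)). apply Rabs_le_between. apply Rle_trans with (2*u*a). apply H; nra. nra.
    - pose proof (DX (2*u'*a)). apply Rabs_le_between. apply Rle_trans with (2*u'*a). apply H; nra. nra.
    - rewrite <- E. unfold P1X. replace (bX x1 - bX (cX (2 * u * a)) - (bX x1 - bX (cX (2 * u' * a))))
        with (bX (cX (2 * u' * a)) - bX (cX (2 * u * a))) by ring.
      apply Rabs_le. pose proof (lipX (cX (2 * u' * a)) (cX (2 * u * a))).
      pose proof (lipX (cX (2 * u * a)) (cX (2 * u' * a))).
      rewrite (dsym dX HmX (cX (2 * u' * a))) in H. lra. }
  assert (Ph2 : forall u u', 1/2 <= u <= u' -> u' <= 1 ->
     dX (P2X u) (P2X u') <= 2 * b' * (u' - u) /\ dY (P2Y u) (P2Y u') <= 2 * b' * (u' - u)).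
  { intros u u' H1 H2.
    assert (E : dY (P2Y u) (P2Y u') = 2 * b' * (u' - u)).
    { unfold P2Y. rewrite cYi; try nra. rewrite Rabs_minus_sym, Rabs_pos_eq; nra. }
    split; [|lra]. unfold P2X. eapply Rle_trans. apply wXl.
    - pose proof (DY ((2*u-1)*b')). apply Rabs_le_between. apply Rle_trans with ((2*u-1)*b'). apply H; nra. nra.
    - pose proof (DY ((2*u'-1)*b')). apply Rabs_le_between. apply Rle_trans with ((2*u'-1)*b'). apply H; nra. nra.
    - rewrite <- E. unfold P2Y.
      replace (bY y1' - bY (cY ((2 * u - 1) * b')) - (bY y1' - bY (cY ((2 * u' - 1) * b'))))
        with (bY (cY ((2 * u' - 1) * b')) - bY (cY ((2 * u - 1) * b'))) by ring.
      apply Rabs_le. pose proof (lipY (cY ((2 * u' - 1) * b')) (cY ((2 * u - 1) * b'))).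
      pose proof (lipY (cY ((2 * u - 1) * b')) (cY ((2 * u' - 1) * b'))).
      rewrite (dsym dY HmY (cY ((2 * u' - 1) * b'))) in H. lra. }
  exists pX, pY, F, (2 * a + 2 * b').
  split; [|split; [|split; [|split; [|split; [|split; [|split; [|split]]]]]]].
  - intros s Hs. destruct (Rle_dec s (1/2)).
    + rewrite pX1, pY1; auto. unfold P1X, P1Y. rewrite wYh. lra.
      apply Rabs_le_between. apply Rle_trans with (2*s*a). apply DX; nra. nra.
    + rewrite pX2, pY2; try lra. unfold P2X, P2Y. rewrite wXh. lra.
      apply Rabs_le_between. apply Rle_trans with ((2*s-1)*b'). apply DY; nra. nra.
  - rewrite pX1 by lra. unfold P1X. rewrite Rmult_0_r, Rmult_0_l. auto.
  - rewrite pY1 by lra. unfold P1Y. rewrite Rmult_0_r, Rmult_0_l, cX0, Rminus_diag. auto.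
  - rewrite pX2 by lra. unfold P2X. replace ((2 * 1 - 1) * b') with b' by ring. rewrite cYb.
    replace (bY y1' - bY y2) with 0 by lra. auto.
  - rewrite pY2 by lra. unfold P2Y. replace ((2 * 1 - 1) * b') with b' by ring. auto.
  - rewrite F1 by lra. ring.
  - rewrite F2 by lra. fold a bb. lra.
  - lra.
  - intros u u' H1 H2. destruct (Rle_or_lt u' (1/2)).
    + rewrite (pX1 u), (pX1 u'), (pY1 u), (pY1 u'), (F1 u), (F1 u'); try lra.
      destruct (Ph1 u u') as [A B]; auto. nra.
    + destruct (Rle_or_lt u (1/2)).
      * rewrite (F1 u), (F2 u'); try lra.
        pose proof (dtri dX HmX (pX u) (pX (1/2)) (pX u')) as TX.
        pose proof (dtri dY HmY (pY u) (pY (1/2)) (pY u')) as TY.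
        rewrite (pX1 u), (pX1 (1/2)), J1, (pX2 u') in TX by lra.
        rewrite (pY1 u), (pY1 (1/2)), J2, (pY2 u') in TY by lra.
        rewrite (pX1 u), (pX2 u') by lra. rewrite (pY1 u), (pY2 u') by lra.
        destruct (Ph1 u (1/2)) as [A B]; try lra. destruct (Ph2 (1/2) u') as [A' B']; try lra.
        rewrite J1 in A. rewrite J2 in B.
        assert (0 <= a * (u' - 1/2)) by (apply Rmult_le_pos; lra).
        assert (0 <= b' * (1/2 - u)) by (apply Rmult_le_pos; lra).
        split; [|split]; nra.
      * rewrite (pX2 u), (pX2 u'), (pY2 u), (pY2 u'), (F2 u), (F2 u'); try lra.
        destruct (Ph2 u u') as [A B]; try lra. nra.
Qed.

End Core.


Lemma cont_of_bound {X : Type} (d : X -> X -> R) (Hm : is_metric d) (p : R -> X) (F : R -> R) (C : R) :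
  0 <= C ->
  (forall u u', 0 <= u <= u' -> u' <= 1 -> d (p u) (p u') <= F u' - F u /\ F u' - F u <= C * (u' - u)) ->
  continuous_on01 d p.
Proof.
  intros HC H s Hs eps He. exists (eps / (C + 1)). split.
  apply Rmult_lt_0_compat; auto. apply Rinv_0_lt_compat; lra.
  intros s' Hs' Hd.
  assert (Hdel : C * (eps / (C + 1)) < eps).
  { apply Rmult_lt_reg_r with (C + 1). lra. unfold Rdiv.
    replace (C * (eps * / (C + 1)) * (C + 1)) with (C * eps) by (field; lra). nra. }
  destruct (Rle_or_lt s s').
  - destruct (H s s') as [A B]; try lra. rewrite Rabs_left1 in Hd by lra.
    assert (C * (s' - s) <= C * (eps / (C + 1))) by (apply Rmult_le_compat_l; lra). lra.
  - destruct (H s' s) as [A B]; try lra. rewrite Rabs_pos_eq in Hd by lra.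
    rewrite (dsym d Hm). 
    assert (C * (s - s') <= C * (eps / (C + 1))) by (apply Rmult_le_compat_l; lra). lra.
Qed.

Section Fin.
Context {X Y : Type} (dX : X -> X -> R) (dY : Y -> Y -> R) (N : R -> R -> R).
Hypothesis HmX : is_metric dX.
Hypothesis HmY : is_metric dY.
Hypothesis Hmono : monotone_norm N.
Hypothesis Hdiag : forall c, 0 <= c -> N c c = c.

Lemma tmono (t : nat -> R) n : (forall i, (i < n)%nat -> t i < t (S i)) ->
  forall k i, (i + k <= n)%nat -> t i <= t (i + k)%nat.
Proof.
  intros H k. induction k as [|k IH]; intros i Hi.
  - rewrite Nat.add_0_r. lra.
  - apply Rle_trans with (t (i + k)%nat). apply IH. lia.
    replace (i + S k)%nat with (S (i + k)) by lia. left. apply H. lia.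
Qed.

Lemma sum_bound (pX : R -> X) (pY : R -> Y) (F : R -> R) :
  (forall u u', 0 <= u <= u' -> u' <= 1 -> dX (pX u) (pX u') <= F u' - F u /\ dY (pY u) (pY u') <= F u' - F u) ->
  forall n (t : nat -> R), t O = 0 -> t n = 1 -> (forall i, (i < n)%nat -> t i < t (S i)) ->
  psum (fun i => N (dX (pX (t i)) (pX (t (S i)))) (dY (pY (t i)) (pY (t (S i))))) n <= F 1 - F 0.
Proof.
  intros H n t t0 tn tinc.
  assert (Hrange : forall i, (i <= n)%nat -> 0 <= t i <= 1).
  { intros i Hi. split.
    - rewrite <- t0. apply (tmono t n tinc i O). lia.
    - rewrite <- tn. replace n with (i + (n - i))%nat by lia. apply (tmono t n tinc). lia. }
  assert (forall m, (m <= n)%nat -> psum (fun i => N (dX (pX (t i)) (pX (t (S i)))) (dY (pY (t i)) (pY (t (S i))))) m <= F (t m) - F 0).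
  { induction m as [|m IH]; intros Hm.
    - simpl. rewrite t0. lra.
    - simpl. specialize (IH ltac:(lia)).
      assert (A := Hrange m ltac:(lia)). assert (B := Hrange (S m) Hm).
      assert (Ht := tinc m ltac:(lia)).
      destruct (H (t m) (t (S m))) as [H1 H2]; try lra.
      assert (N (dX (pX (t m)) (pX (t (S m)))) (dY (pY (t m)) (pY (t (S m)))) <= F (t (S m)) - F (t m)).
      { assert (0 <= dX (pX (t m)) (pX (t (S m)))) by apply (dpos dX HmX).
        assert (0 <= dY (pY (t m)) (pY (t (S m)))) by apply (dpos dY HmY).
        apply Rle_trans with (N (F (t (S m)) - F (t m)) (F (t (S m)) - F (t m))).
        apply Hmono; lra. rewrite Hdiag; lra. }
      lra. }
  rewrite <- tn. apply H0. lia.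
Qed.

Lemma length_finite (pX : R -> X) (pY : R -> Y) (K : R) :
  (forall n (t : nat -> R), t O = 0 -> t n = 1 -> (forall i, (i < n)%nat -> t i < t (S i)) ->
    psum (fun i => N (dX (pX (t i)) (pX (t (S i)))) (dY (pY (t i)) (pY (t (S i))))) n <= K) ->
  exists r, path_length dX dY N pX pY = Finite r /\ r <= K.
Proof.
  intros H. unfold path_length.
  set (E := fun s => exists (n : nat) (t : nat -> R),
     t O = 0 /\ t n = 1 /\ (forall i, (i < n)%nat -> t i < t (S i)) /\
     s = psum (fun i => N (dX (pX (t i)) (pX (t (S i)))) (dY (pY (t i)) (pY (t (S i))))) n).
  destruct (Lub_Rbar_correct E) as [Hub Hlub].
  assert (Hk : is_ub_Rbar E K).
  { intros s [n [t [A [B [C D]]]]]. subst s. simpl. apply H; auto. }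
  specialize (Hlub K Hk).
  set (t1 := fun i : nat => match i with O => 0 | _ => 1 end).
  set (e0 := psum (fun i => N (dX (pX (t1 i)) (pX (t1 (S i)))) (dY (pY (t1 i)) (pY (t1 (S i))))) 1).
  assert (E e0).
  { exists 1%nat, t1. split. reflexivity. split. reflexivity. split.
    intros i Hi. assert (i = O) by lia. subst. simpl. lra. reflexivity. }
  specialize (Hub e0 H0).
  destruct (Lub_Rbar E) as [r| |]; simpl in *; try contradiction.
  exists r. auto.
Qed.

End Fin.


Lemma finish {X Y : Type} (dX : X -> X -> R) (dY : Y -> Y -> R) (gX : R -> X) (gY : R -> Y)
  (N : R -> R -> R) (HmX : is_metric dX) (HmY : is_metric dY) (Hmono : monotone_norm N)
  (Hdiag : forall c, 0 <= c -> N c c = c) x1 y1 x2 y2 (pX : R -> X) (pY : R -> Y) (F : R -> R) C K :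
  (forall s, 0 <= s <= 1 -> busemann_fun dX gX (pX s) + busemann_fun dY gY (pY s) = 0) ->
  pX 0 = x1 -> pY 0 = y1 -> pX 1 = x2 -> pY 1 = y2 ->
  F 0 = 0 -> F 1 <= K -> 0 <= C ->
  (forall u u', 0 <= u <= u' -> u' <= 1 ->
       dX (pX u) (pX u') <= F u' - F u /\ dY (pY u) (pY u') <= F u' - F u /\
       F u' - F u <= C * (u' - u)) ->
  Rbar_le (d_hprod dX dY gX gY N x1 y1 x2 y2) (Finite K).
Proof.
  intros Hc e1 e2 e3 e4 F0 F1 HC Hb.
  destruct (length_finite dX dY N pX pY (F 1 - F 0)) as [r [Hr HrK]].
  { apply sum_bound; auto. intros u u' A B. destruct (Hb u u' A B) as [P [Q _]]. auto. }
  unfold d_hprod.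
  destruct (Glb_Rbar_correct (fun r => exists (pX : R -> X) (pY : R -> Y),
     continuous_on01 dX pX /\ continuous_on01 dY pY /\
     (forall s, 0 <= s <= 1 -> in_hprod dX dY gX gY (pX s) (pY s)) /\
     pX 0 = x1 /\ pY 0 = y1 /\ pX 1 = x2 /\ pY 1 = y2 /\
     path_length dX dY N pX pY = Finite r)) as [Hlb _].
  assert (Hin : exists (pX0 : R -> X) (pY0 : R -> Y),
     continuous_on01 dX pX0 /\ continuous_on01 dY pY0 /\
     (forall s, 0 <= s <= 1 -> in_hprod dX dY gX gY (pX0 s) (pY0 s)) /\
     pX0 0 = x1 /\ pY0 0 = y1 /\ pX0 1 = x2 /\ pY0 1 = y2 /\
     path_length dX dY N pX0 pY0 = Finite r).
  { exists pX, pY. split; [|split; [|split]].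
    - apply (cont_of_bound dX HmX pX F C HC). intros u u' A B. destruct (Hb u u' A B) as [P [_ Q]]. auto.
    - apply (cont_of_bound dY HmY pY F C HC). intros u u' A B. destruct (Hb u u' A B) as [_ [P Q]]. auto.
    - intros s Hs. unfold in_hprod, height. specialize (Hc s Hs). lra.
    - auto. }
  specialize (Hlb r Hin).
  eapply Rbar_le_trans. apply Hlb. simpl. lra.
Qed.

Theorem mainTheorem6 (X Y : Type) (dX : X -> X -> R) (dY : Y -> Y -> R)
  (gX : R -> X) (gY : R -> Y) (N : R -> R -> R) :
  is_metric dX -> proper_space dX -> busemann_space dX ->
  geodesically_complete dX -> gromov_hyperbolic dX ->
  geodesic_ray dX gX -> vertically_convergent dX gX ->
  is_metric dY -> proper_space dY -> busemann_space dY ->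
  geodesically_complete dY -> gromov_hyperbolic dY ->
  geodesic_ray dY gY -> vertically_convergent dY gY ->
  admissible_norm N -> monotone_norm N ->
  forall (x1 x2 : X) (y1 y2 : Y),
    in_hprod dX dY gX gY x1 y1 -> in_hprod dX dY gX gY x2 y2 ->
    Rbar_le (d_hprod dX dY gX gY N x1 y1 x2 y2)
      (Finite (dX x1 x2 + dY y1 y2 + Rmin (dX x1 x2) (dY y1 y2))).
Proof.
  intros HmX HpX HbX HcX _ HrX _ HmY HpY HbY HcY _ HrY _ Hadm Hmono x1 x2 y1 y2 E1 E2.
  assert (Hdiag : forall c, 0 <= c -> N c c = c).
  { intros c Hc. destruct Hadm as [[_ [_ [Hh _]]] [H11 _]].
    pose proof (Hh c 1 1). rewrite !Rmult_1_r in H. rewrite H, H11, Rmult_1_r.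
    apply Rabs_pos_eq; auto. }
  set (bX := busemann_fun dX gX). set (bY := busemann_fun dY gY).
  assert (lX : forall u v, bX u - bX v <= dX u v) by (apply b_lip; auto).
  assert (lY : forall u v, bY u - bY v <= dY u v) by (apply b_lip; auto).
  assert (vX : vert_prop dX bX) by (intros x S HS; apply vertical; auto).
  assert (vY : vert_prop dY bY) by (intros x S HS; apply vertical; auto).
  assert (gX' : geodesic_space dX) by apply HbX.
  assert (gY' : geodesic_space dY) by apply HbY.
  unfold in_hprod, height in E1, E2.
  assert (F1 : bX x1 + bY y1 = 0) by (unfold bX, bY; lra).
  assert (F2 : bX x2 + bY y2 = 0) by (unfold bX, bY; lra).
  destruct (Rle_or_lt (dX x1 x2) (dY y1 y2)) as [Hab|Hab].
  - rewrite Rmin_left by lra.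
    destruct (core dX dY bX bY HmX HmY lX lY gX' gY' vX vY x1 y1 x2 y2 F1 F2)
      as [pX [pY [F [C [Hc [e1 [e2 [e3 [e4 [F0 [Fb [HC Hb]]]]]]]]]]]].
    apply (finish dX dY gX gY N HmX HmY Hmono Hdiag x1 y1 x2 y2 pX pY F C); auto. lra.
  - rewrite Rmin_right by lra.
    assert (F1' : bY y1 + bX x1 = 0) by lra. assert (F2' : bY y2 + bX x2 = 0) by lra.
    destruct (core dY dX bY bX HmY HmX lY lX gY' gX' vY vX y1 x1 y2 x2 F1' F2')
      as [pY [pX [F [C [Hc [e1 [e2 [e3 [e4 [F0 [Fb [HC Hb]]]]]]]]]]]].
    apply (finish dX dY gX gY N HmX HmY Hmono Hdiag x1 y1 x2 y2 pX pY F C); auto.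
    + intros s Hs. specialize (Hc s Hs). unfold bX, bY in Hc. lra.
    + lra.
    + intros u u' A B. destruct (Hb u u' A B) as [P [Q R0]]. auto.
Qed.
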